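(* Absorption does not hold between $SIS$ and any of $III$, $IIS$, $SII$: for each $st\in\{III, IIS, SII\}$, $SIS\circ st\neq SIS$ and $st\circ SIS\neq st$ (as partial functions on terms); a witnessing term is $(\lambda k.k\,\Omega)(\lambda x.y)$, where $\Omega=(\lambda x.xx)(\lambda x.xx)$.
   Context: Terms: $\Lambda ::= x\mid\lambda x.\Lambda\mid\Lambda\Lambda$; $[N/x]B$ is capture-avoiding substitution. An evaluator is a partial function $\Lambda\rightharpoonup\Lambda$ defined by inference rules, undefined (divergent) where no finite derivation exists; $\mathrm{id}$ is the identity; composition is undefined where the inner evaluator is. Eval-apply template: given evaluators $la,op_1,ar_1,op_2,ar_2$ (possibly $ea$ itself), $ea$ is defined by (var) $ea(x)=x$; (abs) $ea(\lambda x.B)=\lambda x.B'$ if $la(B)=B'$; (con) $ea(MN)=B'$ if $op_1(M)=\lambda x.B$, $ar_1(N)=N'$, $ea([N'/x]B)=B'$; (neu) $ea(MN)=M''N'$ if $op_1(M)=M'$, $M'$ not an abstraction, $op_2(M')=M''$, $ar_2(N)=N'$. Uniform evaluator $XYZ\in\{I,S\}^3$: $op_1=ea$, $op_2=\mathrm{id}$, and $la$, $ar_1$, $ar_2$ equal to $ea$ itself when the corresponding letter $X$, $Y$, $Z$ is $S$ and to $\mathrm{id}$ when it is $I$. A strategy $st_2$ absorbs $st_1$ iff $st_2\circ st_1=st_2$. *)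

(* Defs.v *)
From Stdlib Require Import Arith.

Inductive term : Type :=
| var : nat -> term
| lam : term -> term
| app : term -> term -> term.

Fixpoint lift (d c : nat) (t : term) : term :=
  match t with
  | var n => if c <=? n then var (n + d) else var n
  | lam b => lam (lift d (S c) b)
  | app a b => app (lift d c a) (lift d c b)
  end.

(* subst k N t : capture-avoiding substitution of N for index k in t,
   removing the binder (indices above k are decremented). *)
Fixpoint subst (k : nat) (N : term) (t : term) : term :=
  match t with
  | var n => if n <? k then var n
             else if n =? k then lift k 0 N
             else var (pred n)
  | lam b => lam (subst (S k) N b)
  | app a b => app (subst k N a) (subst k N b)
  end.

(* [N/x]B where B is the body of  lam B  (x = index 0) *)
Definition subst0 (N B : term) : term := subst 0 N B.

Definition is_abs (t : term) : Prop :=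
  match t with lam _ => True | _ => False end.

(* Letters of uniform evaluators: I = identity, S = the evaluator itself. *)
Inductive letter : Type := I | S.

(* Uniform evaluator XYZ, as a big-step relation: ev X Y Z t t' means
   ea(t) = t' has a finite derivation. op1 = ea, op2 = id,
   la / ar1 / ar2 are given by the letters X / Y / Z via [evl]. *)
Inductive ev (X Y Z : letter) : term -> term -> Prop :=
| ev_var : forall n, ev X Y Z (var n) (var n)
| ev_abs : forall B B', evl X Y Z X B B' -> ev X Y Z (lam B) (lam B')
| ev_con : forall M N B N' B',
    ev X Y Z M (lam B) -> evl X Y Z Y N N' ->
    ev X Y Z (subst0 N' B) B' -> ev X Y Z (app M N) B'
| ev_neu : forall M N M' N',
    ev X Y Z M M' -> ~ is_abs M' -> evl X Y Z Z N N' ->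
    ev X Y Z (app M N) (app M' N')
with evl (X Y Z : letter) : letter -> term -> term -> Prop :=
| evl_I : forall t, evl X Y Z I t t
| evl_S : forall t t', ev X Y Z t t' -> evl X Y Z S t t'.

(* An evaluator, viewed as (the graph of) a partial function. *)
Definition evaluator := term -> term -> Prop.

Definition strat (X Y Z : letter) : evaluator := ev X Y Z.

Definition III := strat I I I.
Definition IIS := strat I I S.
Definition SII := strat S I I.
Definition SIS := strat S I S.

Definition compose (g f : evaluator) : evaluator :=
  fun t u => exists m, f t m /\ g m u.

Definition differ_at (f g : evaluator) (t : term) : Prop :=
  ~ (forall u, f t u <-> g t u).

Definition delta : term := lam (app (var 0) (var 0)).
Definition Omega : term := app delta delta.

(* (\k. k Omega) (\x. y), with y the free variable of index 0 *)
Definition witness : term :=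
  app (lam (app (var 0) Omega)) (lam (var 1)).

(* Main.v *)
Require Import Defs.
Lemma delta_ev : forall B, ev S I S delta (lam B) -> B = app (var 0) (var 0).
Proof.
  intros B H. inversion H as [|? ? Hl| |]; subst.
  inversion Hl as [|? ? He]; subst.
  inversion He as [| |? ? ? ? ? Hv|? ? ? ? Hv Hna Hr]; subst.
  - inversion Hv.
  - inversion Hv; subst. inversion Hr as [|? ? Hx]; subst. inversion Hx; subst. reflexivity.
Qed.

Lemma omega_div : forall t u, ev S I S t u -> t = Omega -> False.
Proof.
  intros t u H. induction H; intros E; try discriminate.
  - injection E as -> ->.
    apply IHev2. apply delta_ev in H. subst.
    inversion H0; subst. reflexivity.
  - injection E as -> ->. inversion H; subst. apply H0; exact Logic.I.
Qed.

Lemma SIS_witness : forall u, ~ SIS witness u.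
Proof.
  intros u H. unfold SIS, strat, witness in H.
  inversion H as [|? ? Hl|? ? ? ? ? Hm Ha Hb|? ? ? ? Hm Hna Hr]; subst;
  inversion Hm as [|? ? Hl2| |]; subst;
  inversion Hl2 as [|? ? He]; subst;
  inversion He as [| |? ? ? ? ? Hv|? ? ? ? Hv Hna2 Hr2]; subst;
  try (inversion Hv; fail);
  inversion Hr2; subst; eapply omega_div; eauto.
Qed.

Lemma st_witness : forall st : evaluator, (st = III \/ st = IIS \/ st = SII) ->
  st witness (var 0).
Proof.
  intros st [E|[E|E]]; subst st; unfold III, IIS, SII, strat, witness.
  - eapply ev_con. apply ev_abs. constructor. constructor. cbn.
    eapply ev_con. apply ev_abs. constructor. constructor. cbn. constructor.
  - eapply ev_con. apply ev_abs. constructor. constructor. cbn.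
    eapply ev_con. apply ev_abs. constructor. constructor. cbn. constructor.
  - eapply ev_con. apply ev_abs. constructor.
    eapply ev_neu. constructor. simpl; auto. constructor.
    constructor. cbn.
    eapply ev_con. apply ev_abs. constructor. constructor. constructor. cbn. constructor.
Qed.

Theorem mainTheorem4 :
  forall st : evaluator, (st = III \/ st = IIS \/ st = SII) ->
    differ_at (compose SIS st) SIS witness /\
    differ_at (compose st SIS) st witness.
Proof.
  intros st Hst. split; intro Hd.
  - apply (SIS_witness (var 0)). apply Hd. exists (var 0). split.
    + apply st_witness; auto.
    + constructor.
  - destruct (proj2 (Hd (var 0)) (st_witness st Hst)) as [m [Hm _]].
    exact (SIS_witness _ Hm).
Qed.
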